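(* Let $f$ be a complex polynomial of degree $d$ with $f(0)\neq 0$, with roots $\zeta_1,\dots,\zeta_d$ (counted with multiplicity) ordered so that $|\zeta_1|\le\cdots\le|\zeta_d|$, and assume not all roots have the same modulus. Let $\rho=\min\{|\zeta_{i+1}|/|\zeta_i| : |\zeta_{i+1}|>|\zeta_i|\}$. Let $N$ be a positive integer with \[ N > 3+\log_2\frac{d\log 2}{\log\rho}, \] let $g=G^Nf=\sum_{i=0}^d g_ix^i$ and $r_i=-2^{-N}\log|g_i|\in\mathbb{R}\cup\{+\infty\}$ for $i=0,\dots,d$. Then the Strict Convex Hull procedure (described in the context) with input $N,d,r=(r_0,\dots,r_d),\rho$ returns exactly the increasing list of the elements of \[ I=\{0,d\}\cup\{i : 1\le i\le d-1,\ |\zeta_i|<|\zeta_{i+1}|\}, \] i.e. the abscissae of the sharp corners of the convex piecewise linear function on $[0,d]$ interpolating $i\mapsto\sum_{j\le i}\log|\zeta_j|$.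
   Context: $\log$ is the natural logarithm. The Graeffe operator maps a degree $d$ polynomial $f$ to $Gf(x)=(-1)^d f(\sqrt{x})f(-\sqrt{x})$, again a degree $d$ polynomial (whose roots are the squares of those of $f$); $G^N$ is its $N$-th iterate. Usual conventions for $+\infty$ are used in comparisons and arithmetic. Strict Convex Hull procedure, input $N,d,r_0,\dots,r_d,\rho$: set $R=\rho^{2^N}$ and \[ E=\tfrac12\Big(2^{-N+1}\log(2^d+2^dR^{-1})-2^{-N+2}\log(1-2^dR^{-1})+\tfrac{\log\rho}{2}\Big). \] Initialize a list with $\Lambda_0=0$ and $j=0$. For $i=1,2,\dots,d$ in turn: while $j>0$ and \[ \frac{r_{\Lambda_j}-r_{\Lambda_{j-1}}}{\Lambda_j-\Lambda_{j-1}} > \frac{r_i-r_{\Lambda_j}}{i-\Lambda_j}-E, \] set $j\leftarrow j-1$ (discarding $\Lambda_j$); then set $j\leftarrow j+1$ and $\Lambda_j\leftarrow i$. After the loop, return $(\Lambda_0,\dots,\Lambda_j)$. *)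

(* Defs.v *)
From HB Require Import structures.
From mathcomp Require Import all_boot all_order all_algebra.
From mathcomp Require Import complex.
From mathcomp Require Import all_classical all_reals all_analysis.
Set Implicit Arguments.
Unset Strict Implicit.
Unset Printing Implicit Defensive.
Import Order.TTheory GRing.Theory Num.Theory.
Local Open Scope ring_scope.

Definition cmod {R : realType} (z : R[i]) : R := ComplexField.Normc.normc z.

(* Graeffe operator: G f (x) = (-1)^d f(sqrt x) f(-sqrt x), d = deg f.
   Writing f(x) = E(x^2) + x O(x^2) (E = even_poly f, O = odd_poly f),
   f(sqrt x) f(-sqrt x) = E(x)^2 - x O(x)^2. *)
Definition graeffe {R : realType} (f : {poly R[i]}) : {poly R[i]} :=
  (-1) ^+ (size f).-1 *: (even_poly f ^+ 2 - 'X * odd_poly f ^+ 2).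

Local Open Scope ereal_scope.

Definition sch_test {R : realType} (r : nat -> \bar R) (E : R)
    (b a i : nat) : bool :=
  ((r i - r a) * (((i - a)%:R : R)^-1)%:E - E%:E <
     (r a - r b) * (((a - b)%:R : R)^-1)%:E).

(* the while loop; the stack is stored with Lambda_j at its head,
   so "j > 0" means the stack has at least two elements *)
Fixpoint sch_pop {R : realType} (r : nat -> \bar R) (E : R) (i : nat)
    (st : seq nat) : seq nat :=
  match st with
  | a :: ((b :: _) as rest) =>
      if sch_test r E b a i then sch_pop r E i rest else st
  | _ => st
  end.

Definition sch_step {R : realType} (r : nat -> \bar R) (E : R)
    (st : seq nat) (i : nat) : seq nat :=
  i :: sch_pop r E i st.

Local Close Scope ereal_scope.

Definition sch_E {R : realType} (N d : nat) (rho : R) : R :=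
  let Rr := rho ^+ (2 ^ N) in
  2^-1 * (2 ^- N * 2 * ln (2 ^+ d + 2 ^+ d * Rr^-1)
          - 2 ^- N * 4 * ln (1 - 2 ^+ d * Rr^-1)
          + ln rho / 2).

Definition strict_convex_hull {R : realType} (N d : nat)
    (r : nat -> \bar R) (rho : R) : seq nat :=
  rev (foldl (sch_step r (sch_E N d rho)) [:: 0%N] (iota 1 d)).

(* Main.v *)
Require Import Defs.
From HB Require Import structures.
From mathcomp Require Import all_boot all_order all_algebra.
From mathcomp Require Import complex.
From mathcomp Require Import all_classical all_reals all_analysis.
From mathcomp Require Import lra ring zify.
Import Order.TTheory GRing.Theory Num.Theory.
Local Open Scope ring_scope.

Definition Cst (P : nat -> bool) (a : nat) : seq nat := rev (seq.filter P (iota 0 a.+1)).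

Lemma iotaS0 n : iota 0 n.+1 = rcons (iota 0 n) n.
Proof. by rewrite -addn1 iotaD cats1. Qed.

Lemma iota_rcons1 m n : iota m n.+1 = rcons (iota m n) (m + n)%N.
Proof. elim: n m => [|n IH] m; first by rewrite addn0. by rewrite -[iota m n.+2]/(m :: iota m.+1 n.+1) IH addSnnS. Qed.

Lemma filter_iota_skip (P : nat -> bool) a k : (a <= k)%N ->
  (forall y, (a < y <= k)%N -> ~~ P y) -> seq.filter P (iota 0 k.+1) = seq.filter P (iota 0 a.+1).
Proof.
elim: k => [|k IH] hak hno; first by move: hak; rewrite leqn0 => /eqP ->.
case: (ltngtP a k.+1) => [h|h|->//]; last by move: hak; rewrite leqNgt h.
rewrite iotaS0 -cats1 seq.filter_cat /= (negbTE (hno k.+1 _)) ?cats0; last by rewrite h leqnn.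
by apply: IH => // y /andP[h1 h2]; apply: hno; rewrite h1 /= ltnW.
Qed.

Lemma Cst_next (P : nat -> bool) a c : P c -> (a < c)%N ->
  (forall y, (a < y < c)%N -> ~~ P y) -> Cst P c = c :: Cst P a.
Proof.
move=> Pc ac hno; rewrite /Cst iotaS0 -cats1 seq.filter_cat /= Pc rev_cat /=.
case: c Pc ac hno => // c Pc ac hno.
by rewrite (@filter_iota_skip P a c) // => y /andP[h1 h2]; apply: hno; rewrite h1.
Qed.

Lemma Cst_head (P : nat -> bool) a : P a -> Cst P a = a :: rev (seq.filter P (iota 0 a)).
Proof. by move=> Pa; rewrite /Cst iotaS0 -cats1 seq.filter_cat /= Pa rev_cat. Qed.

Lemma prev_corner (P : nat -> bool) a : P 0%N -> (0 < a)%N ->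
  exists b rest, rev (seq.filter P (iota 0 a)) = b :: rest /\ P b /\ (b < a)%N /\
     (forall y, (b < y < a)%N -> ~~ P y).
Proof.
move=> P0; elim: a => // a IH _.
case: (posnP a) => [->|apos].
  exists 0%N, [::]; rewrite /= P0.
  split; first by []. split; first by []. split; first by []. by case.
have [Pa|nPa] := boolP (P a).
  exists a, (rev (seq.filter P (iota 0 a))); rewrite iotaS0 -cats1 seq.filter_cat /= Pa rev_cat.
  split; first by []. split; first by []. split; first by [].
  move=> y /andP[h1 h2]; move: h2; by rewrite ltnS leqNgt h1.
have [b [rest [e [Pb [ba hno]]]]] := IH apos.
exists b; exists rest; rewrite iotaS0 -cats1 seq.filter_cat /= (negbTE nPa) cats0.
split; first by []. split; first by []. split; first exact: (ltn_trans ba).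
move=> y /andP[h1 h2]; case: (ltngtP y a) => [ya|ya|->//].
  by apply: hno; rewrite h1.
by move: h2; rewrite ltnS leqNgt ya.
Qed.

Lemma next_corner (P : nat -> bool) d j : P d -> (j <= d)%N ->
  exists c, [/\ (j <= c <= d)%N, P c & forall y, (j <= y < c)%N -> ~~ P y].
Proof.
move=> Pd; move eq: (d - j)%N => k; elim: k j eq => [|k IH] j eq jd.
  have -> : j = d by apply/eqP; rewrite eqn_leq jd /= -subn_eq0 eq.
  exists d; rewrite leqnn; split => // y /andP[h1 h2]; move: h2; by rewrite ltnNge h1.
have [Pj|nPj] := boolP (P j).
  exists j; rewrite leqnn jd; split => // y /andP[h1 h2]; move: h2; by rewrite ltnNge h1.
have jd' : (j < d)%N by rewrite -subn_gt0 eq.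
have [c [/andP[h1 h2] Pc hno]] := IH j.+1 ltac:(by rewrite subnS eq) jd'.
exists c; split => //; first by rewrite h2 andbT ltnW.
move=> y /andP[h3 h4]; case: (ltngtP j y) => [jy|jy|<-//].
  by apply: hno; rewrite jy.
by move: h3; rewrite leqNgt jy.
Qed.
Section Alg.
Variable R : realType.
Variables (d : nat) (r : nat -> \bar R) (E : R) (P : nat -> bool) (L t sl : nat -> R).
Variables (eps del lam : R).
Hypothesis P0 : P 0%N.
Hypothesis Pd : P d.
Hypothesis Hc : forall x, (x <= d)%N -> P x -> r x = (t x)%:E /\ `|t x - L x| <= eps.
Hypothesis Hn : forall x, (x <= d)%N -> ~~ P x ->
  r x = +oo%E \/ (r x = (t x)%:E /\ L x - del <= t x).
Hypothesis Hlin : forall a c x, P a -> P c -> (a < c)%N -> (c <= d)%N ->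
  (forall y, (a < y < c)%N -> ~~ P y) -> (a <= x <= c)%N -> L x = L a + (x - a)%:R * sl a.
Hypothesis Hkink : forall b a c, P b -> P a -> P c -> (b < a)%N -> (a < c)%N -> (c <= d)%N ->
  (forall y, (b < y < a)%N -> ~~ P y) -> (forall y, (a < y < c)%N -> ~~ P y) -> sl b + lam <= sl a.
Hypothesis eps0 : 0 <= eps.
Hypothesis del0 : 0 <= del.
Hypothesis HE1 : 2 * (del + eps) < E.
Hypothesis HE2 : E + del + 4 * eps <= lam.

Definition slp (y x : nat) := (t x - t y) / (x - y)%:R.

Lemma test_fin b a i : r b = (t b)%:E -> r a = (t a)%:E -> r i = (t i)%:E ->
  sch_test r E b a i = (slp a i - E < slp b a).
Proof. by move=> hb ha hi; rewrite /sch_test hb ha hi /slp -!EFinB -?EFinM lte_fin. Qed.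

Lemma test_ooa b a i : r a = +oo%E -> r b = (t b)%:E -> (a < i)%N -> (b < a)%N ->
  sch_test r E b a i.
Proof.
move=> ha hb ai ba; rewrite /sch_test ha hb addeNy.
have p1 : (0 < ((i - a)%:R : R)^-1) by rewrite invr_gt0 ltr0n subn_gt0.
have p2 : (0 < ((a - b)%:R : R)^-1) by rewrite invr_gt0 ltr0n subn_gt0.
by rewrite gt0_mulNye ?lte_fin // addNye addye // gt0_mulye ?lte_fin.
Qed.

Lemma test_ooi b a i : r i = +oo%E -> r a = (t a)%:E -> r b = (t b)%:E -> (a < i)%N ->
  ~~ sch_test r E b a i.
Proof.
move=> hi ha hb ai; rewrite /sch_test hi ha hb addye //.
have p1 : (0 < ((i - a)%:R : R)^-1) by rewrite invr_gt0 ltr0n subn_gt0.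
by rewrite gt0_mulye ?lte_fin // addye.
Qed.

Lemma pop_cons2 i x y l : sch_pop r E i (x :: y :: l) =
  if sch_test r E y x i then sch_pop r E i (y :: l) else x :: y :: l.
Proof. by []. Qed.

Fixpoint good (a : nat) (ps : seq nat) : Prop :=
  match ps with
  | [::] => True
  | x :: ps' => [/\ good a ps', (head a ps' < x)%N, r (head a ps') = (t (head a ps'))%:E &
      (r x = +oo%E \/ (r x = (t x)%:E /\ sl a - (del + eps) <= slp (head a ps') x))]
  end.

Lemma good_head a ps : good a ps -> (a <= head a ps)%N.
Proof.
elim: ps => [|x ps IH] //= [g h _ _]; exact: (leq_trans (IH g) (ltnW h)).
Qed.

Lemma E_ge0 : 0 <= E.
Proof. move: HE1 del0 eps0 => h1 h2 h3. lra. Qed.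

Lemma natrBE {m n : nat} : (n <= m)%N -> (m - n)%:R = m%:R - n%:R :> R.
Proof. by move=> h; rewrite natrB. Qed.

Lemma seg_P1 a c j : P a -> P c -> (a < j)%N -> (j < c)%N -> (c <= d)%N ->
  (forall y, (a < y < c)%N -> ~~ P y) -> r j = (t j)%:E ->
  sl a - (del + eps) <= slp a j.
Proof.
move=> Pa Pc aj jc cd hno hj.
have jd : (j <= d)%N by apply: leq_trans cd; exact: ltnW.
have [|[_ hb]] := Hn j jd (hno j ltac:(by rewrite aj jc)); first by rewrite hj.
have [_ ha] := Hc a (leq_trans (ltnW aj) jd) Pa.
have hL := Hlin a c j Pa Pc (ltn_trans aj jc) cd hno ltac:(by rewrite (ltnW aj) (ltnW jc)).
rewrite /slp ler_pdivlMr; last by rewrite ltr0n subn_gt0.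
move: hL; rewrite natrBE ?(ltnW aj) // => hL.
have h1 : 1 <= j%:R - a%:R :> R by rewrite -natrBE ?(ltnW aj) // ler1n subn_gt0.
move: ha; rewrite ler_norml => /andP[ha1 ha2].
have hD : del + eps <= (del + eps) * (j%:R - a%:R).
  by rewrite -{1}(mulr1 (del + eps)) ler_wpM2l // addr_ge0.
nra.
Qed.

Lemma seg_P2 a c x : P a -> P c -> (a < x)%N -> (x < c)%N -> (c <= d)%N ->
  (forall y, (a < y < c)%N -> ~~ P y) -> r x = (t x)%:E ->
  slp x c <= sl a + (del + eps).
Proof.
move=> Pa Pc ax xc cd hno hx.
have xd : (x <= d)%N by apply: leq_trans cd; exact: ltnW.
have [|[_ hb]] := Hn x xd (hno x ltac:(by rewrite ax xc)); first by rewrite hx.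
have [_ hcc] := Hc c cd Pc.
have hL := Hlin a c x Pa Pc (ltn_trans ax xc) cd hno ltac:(by rewrite (ltnW ax) (ltnW xc)).
have hLc := Hlin a c c Pa Pc (ltn_trans ax xc) cd hno ltac:(by rewrite (ltnW (ltn_trans ax xc)) leqnn).
rewrite /slp ler_pdivrMr; last by rewrite ltr0n subn_gt0.
move: hL hLc; rewrite (natrBE (ltnW ax)) (natrBE (ltnW (ltn_trans ax xc))) (natrBE (ltnW xc)) => hL hLc.
have h1 : 1 <= c%:R - x%:R :> R by rewrite -natrBE ?(ltnW xc) // ler1n subn_gt0.
move: hcc; rewrite ler_norml => /andP[hc1 hc2].
have hD : del + eps <= (del + eps) * (c%:R - x%:R).
  by rewrite -{1}(mulr1 (del + eps)) ler_wpM2l // addr_ge0.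
nra.
Qed.

Lemma seg_P3 a c : P a -> P c -> (a < c)%N -> (c <= d)%N ->
  (forall y, (a < y < c)%N -> ~~ P y) ->
  sl a - 2 * eps <= slp a c /\ slp a c <= sl a + 2 * eps.
Proof.
move=> Pa Pc ac cd hno.
have [_ hcc] := Hc c cd Pc.
have [_ haa] := Hc a (leq_trans (ltnW ac) cd) Pa.
have hLc := Hlin a c c Pa Pc ac cd hno ltac:(by rewrite (ltnW ac) leqnn).
move: hLc; rewrite natrBE ?(ltnW ac) // => hLc.
have h1 : 1 <= c%:R - a%:R :> R by rewrite -natrBE ?(ltnW ac) // ler1n subn_gt0.
move: hcc haa; rewrite !ler_norml => /andP[hc1 hc2] /andP[ha1 ha2].
rewrite /slp natrBE ?(ltnW ac) //.
have hp : 0 < c%:R - a%:R :> R by lra.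
have hD : 2 * eps <= 2 * eps * (c%:R - a%:R).
  by rewrite -{1}(mulr1 (2 * eps)) ler_wpM2l // mulr_ge0.
split.
  rewrite ler_pdivlMr //; nra.
rewrite ler_pdivrMr //; nra.
Qed.

Lemma cat_head (a : nat) (ps rest : seq nat) : ps ++ a :: rest = head a ps :: behead (ps ++ a :: rest).
Proof. by case: ps. Qed.

Lemma Cst0 : Cst P 0 = [:: 0%N].
Proof. by rewrite /Cst /= P0. Qed.

Lemma pop_nc a c j ps : P a -> P c -> (a < j)%N -> (j < c)%N -> (c <= d)%N ->
  (forall y, (a < y < c)%N -> ~~ P y) -> good a ps -> (head a ps < j)%N ->
  exists ps', sch_pop r E j (ps ++ Cst P a) = ps' ++ Cst P a /\ good a (j :: ps').
Proof.
move=> Pa Pc aj jc cd hno.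
have ad : (a <= d)%N by apply: (leq_trans (ltnW aj)); apply: (leq_trans (ltnW jc)).
have jd : (j <= d)%N by apply: (leq_trans (ltnW jc)).
have [ra _] := Hc a ad Pa.
have jcond : r j = +oo%E \/ (r j = (t j)%:E /\ sl a - (del + eps) <= slp a j).
  have [h|[h _]] := Hn j jd (hno j ltac:(by rewrite aj jc)); first by left.
  by right; split => //; apply: (seg_P1 a c j Pa Pc aj jc cd hno h).
elim: ps => [|x ps0 IH].
  move=> _ _; exists [::]; split; last by split.
  rewrite cat0s; case: (posnP a) => [a0|apos].
    by move: Pa; rewrite a0 => Pa; rewrite Cst0.
  have [b [rest [e [Pb [ba hnob]]]]] := prev_corner P a P0 apos.
  rewrite Cst_head // e pop_cons2.
  have -> : sch_test r E b a j = false; last by [].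
  have [rb _] := Hc b (leq_trans (ltnW ba) ad) Pb.
  case: jcond => [hj|[hj hs]]; first by apply/negbTE/test_ooi.
  rewrite test_fin //; apply/negbTE; rewrite -leNgt.
  have [_ h2] := seg_P3 b a Pb Pa ba ad hnob.
  have hk := Hkink b a c Pb Pa Pc ba (ltn_trans aj jc) cd hnob hno.
  move: HE2 eps0 del0 => h3 h4 h5; lra.
move=> gx hxj; have [g0 hx ry xcond] := gx.
have hx0 : (head a ps0 < j)%N by apply: ltn_trans hxj.
have e2 : head a ps0 :: behead (ps0 ++ Cst P a) = ps0 ++ Cst P a.
  by rewrite (Cst_head P a Pa) -cat_head.
rewrite -[(x :: ps0) ++ Cst P a]/(x :: (ps0 ++ Cst P a)) -e2 pop_cons2 e2.
case: ifP => htest.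
  exact: (IH g0 hx0).
exists (x :: ps0); split; first by [].
have [rx rxb] : r x = (t x)%:E /\ sl a - (del + eps) <= slp (head a ps0) x.
  case: xcond => // hoo; move: htest.
  by rewrite test_ooa // (leq_trans _ hx) // (good_head a ps0 g0).
split => //.
case: jcond => [hj|[hj hs]]; [by left | right; split => //].
move: htest; rewrite test_fin // => /negbT; rewrite -leNgt => h.
move: E_ge0 => h0; lra.
Qed.
Lemma pop_c a c ps : P a -> P c -> (a < c)%N -> (c <= d)%N ->
  (forall y, (a < y < c)%N -> ~~ P y) -> good a ps -> (head a ps < c)%N ->
  sch_pop r E c (ps ++ Cst P a) = Cst P a.
Proof.
move=> Pa Pc ac cd hno.
have ad : (a <= d)%N by apply: (leq_trans (ltnW ac)).
have [ra _] := Hc a ad Pa.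
have [rc _] := Hc c cd Pc.
elim: ps => [|x ps0 IH].
  move=> _ _; rewrite cat0s; case: (posnP a) => [a0|apos].
    by move: Pa; rewrite a0 => Pa; rewrite Cst0.
  have [b [rest [e [Pb [ba hnob]]]]] := prev_corner P a P0 apos.
  rewrite Cst_head // e pop_cons2.
  have -> : sch_test r E b a c = false; last by [].
  have [rb _] := Hc b (leq_trans (ltnW ba) ad) Pb.
  rewrite test_fin //; apply/negbTE; rewrite -leNgt.
  have [_ h2] := seg_P3 b a Pb Pa ba ad hnob.
  have [h1 _] := seg_P3 a c Pa Pc ac cd hno.
  have hk := Hkink b a c Pb Pa Pc ba ac cd hnob hno.
  move: HE2 eps0 del0 => h3 h4 h5; lra.
move=> gx hxc; have [g0 hx ry xcond] := gx.
have hx0 : (head a ps0 < c)%N by apply: ltn_trans hxc.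
have ax : (a < x)%N by apply: leq_trans hx; rewrite ltnS (good_head a ps0 g0).
have e2 : head a ps0 :: behead (ps0 ++ Cst P a) = ps0 ++ Cst P a.
  by rewrite (Cst_head P a Pa) -cat_head.
rewrite -[(x :: ps0) ++ Cst P a]/(x :: (ps0 ++ Cst P a)) -e2 pop_cons2 e2.
have -> : sch_test r E (head a ps0) x c; last exact: IH.
case: xcond => [hoo|[rx rxb]]; first by rewrite test_ooa.
rewrite test_fin //.
have h2 := seg_P2 a c x Pa Pc ax hxc cd hno rx.
move: HE1 => h3; lra.
Qed.

Definition Inv_ i st := exists a ps, [/\ P a, (a <= i)%N,
  (forall y, (a < y <= i)%N -> ~~ P y), st = ps ++ Cst P a & good a ps /\ (head a ps <= i)%N].

Lemma inv0 : Inv_ 0 [:: 0%N].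
Proof.
exists 0%N, [::]; split => //; first by move=> y /andP[h1 h2]; move: h2; rewrite leqNgt h1.
by rewrite Cst0.
Qed.

Lemma invS i st : (i < d)%N -> Inv_ i st -> Inv_ i.+1 (sch_step r E st i.+1).
Proof.
move=> id [a [ps [Pa ai hno -> [g hh]]]].
rewrite /sch_step.
have aj : (a < i.+1)%N by rewrite ltnS.
have hhj : (head a ps < i.+1)%N by rewrite ltnS.
have [Pj|nPj] := boolP (P i.+1).
  have hno' : forall y, (a < y < i.+1)%N -> ~~ P y.
    by move=> y /andP[h1 h2]; apply: hno; rewrite h1 -ltnS.
  rewrite (pop_c a i.+1 ps Pa Pj aj id hno' g hhj).
  exists i.+1, [::]; split; first exact: Pj.
      by [].
    by move=> y /andP[h1 h2]; move: h2; rewrite leqNgt h1.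
  by rewrite cat0s (Cst_next P a i.+1 Pj aj hno').
  by [].
have [c [/andP[h1 h2] Pc hnoc]] := next_corner P d i.+1 Pd id.
have jc : (i.+1 < c)%N.
  rewrite ltn_neqAle h1 andbT; apply/eqP => e; move: nPj; by rewrite e Pc.
have hnoac : forall y, (a < y < c)%N -> ~~ P y.
  move=> y /andP[y1 y2]; case: (leqP y i) => yi; first by apply: hno; rewrite y1.
  by apply: hnoc; rewrite yi.
have [ps' [e g']] := pop_nc a c i.+1 ps Pa Pc aj jc h2 hnoac g hhj.
rewrite e; exists a, (i.+1 :: ps'); split => //.
  by rewrite (leq_trans ai).
move=> y /andP[y1 y2]; case: (ltngtP y i.+1) => [yi|yi|->//].
  by apply: hno; rewrite y1 -ltnS.
by move: y2; rewrite leqNgt yi.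
Qed.

Lemma inv_fold i : (i <= d)%N -> Inv_ i (foldl (sch_step r E) [:: 0%N] (iota 1 i)).
Proof.
elim: i => [|i IH] hi; first exact: inv0.
rewrite iota_rcons1 foldl_rcons add1n.
exact: (invS i _ hi (IH (ltnW hi))).
Qed.

Theorem sch_correct : rev (foldl (sch_step r E) [:: 0%N] (iota 1 d)) = seq.filter P (iota 0 d.+1).
Proof.
have [a [ps [Pa ad hno -> [g hh]]]] := inv_fold d (leqnn d).
have ea : a = d.
  apply/eqP; rewrite eqn_leq ad /= leqNgt; apply/negP => hlt.
  by move: (hno d); rewrite hlt leqnn Pd => /(_ isT).
subst a.
case: ps g hh => [|x ps]; first by rewrite cat0s /Cst revK.
move=> /= [g0 hx _ _] hxd.
have := good_head d ps g0.
by move=> h; move: (leq_ltn_trans h hx); rewrite ltnNge hxd.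
Qed.
End Alg.
Section Gr.
Variable R : realType.
Local Notation C := (R[i]).

Lemma cmod0 : cmod (0 : C) = 0. Proof. exact: ComplexField.Normc.normc0. Qed.
Lemma cmod1 : cmod (1 : C) = 1. Proof. exact: ComplexField.Normc.normc1. Qed.
Lemma cmodM (x y : C) : cmod (x * y) = cmod x * cmod y.
Proof. exact: ComplexField.Normc.normcM. Qed.
Lemma cmod_ge0 (x : C) : 0 <= cmod x.
Proof. by case: x => a b; rewrite /cmod /= sqrtr_ge0. Qed.
Lemma cmod_eq0 (x : C) : cmod x = 0 -> x = 0.
Proof. exact: ComplexField.Normc.eq0_normc. Qed.
Lemma cmod_gt0 (x : C) : x != 0 -> 0 < cmod x.
Proof. by move=> h; rewrite lt_neqAle cmod_ge0 andbT eq_sym; apply/eqP => /cmod_eq0 /eqP; apply/negP. Qed.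
Lemma cmodD (x y : C) : cmod (x + y) <= cmod x + cmod y.
Proof. exact: le_normcD. Qed.
Lemma cmodN (x : C) : cmod (- x) = cmod x.
Proof. exact: normcN. Qed.
Lemma cmodX (x : C) n : cmod (x ^+ n) = cmod x ^+ n.
Proof. by elim: n => [|n IH]; rewrite ?expr0 ?cmod1 // !exprS cmodM IH. Qed.
Lemma cmod_sign n : cmod ((-1) ^+ n : C) = 1.
Proof. by rewrite cmodX cmodN cmod1 expr1n. Qed.
Lemma cmod_prod (I : Type) (r : seq I) (P : pred I) (F : I -> C) :
  cmod (\prod_(i <- r | P i) F i) = \prod_(i <- r | P i) cmod (F i).
Proof. exact: (big_morph _ cmodM cmod1). Qed.
Lemma cmod_sum (I : Type) (r : seq I) (P : pred I) (F : I -> C) :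
  cmod (\sum_(i <- r | P i) F i) <= \sum_(i <- r | P i) cmod (F i).
Proof.
elim/big_rec2: _ => [|i y1 y2 _ h]; first by rewrite cmod0.
by apply: (le_trans (cmodD _ _)); rewrite lerD2l.
Qed.

Lemma comp_X2_inj (p q : {poly C}) : p \Po 'X^2 = q \Po 'X^2 -> p = q.
Proof.
move=> h; apply/polyP => i.
have := congr1 (fun r : {poly C} => r`_(i * 2)) h.
by rewrite /= !coef_comp_poly_Xn // dvdn_mull // mulnK.
Qed.

Lemma X2_negX : ('X^2 : {poly C}) \Po (- 'X) = 'X^2.
Proof. by rewrite comp_Xn_poly sqrrN. Qed.

Lemma neg_comp_X2 (p : {poly C}) : (p \Po 'X^2) \Po (- 'X) = p \Po 'X^2.
Proof. by rewrite -comp_polyA X2_negX. Qed.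

Lemma comp_negX (f : {poly C}) :
  f \Po (- 'X) = even_poly f \Po 'X^2 - (odd_poly f \Po 'X^2) * 'X.
Proof.
rewrite -{1}(poly_even_odd f) comp_polyD comp_polyM comp_polyX !neg_comp_X2.
by rewrite mulrN.
Qed.

Lemma comp_sq (p q : {poly C}) : (p ^+ 2) \Po q = (p \Po q) ^+ 2.
Proof. by rewrite !expr2 comp_polyM. Qed.

Lemma graeffe_key (f : {poly C}) :
  (even_poly f ^+ 2 - 'X * odd_poly f ^+ 2) \Po 'X^2 = f * (f \Po (- 'X)).
Proof.
rewrite comp_negX.
set A := even_poly f \Po 'X^2; set B := odd_poly f \Po 'X^2.
have hf : A + B * 'X = f by exact: poly_even_odd.
rewrite comp_polyB comp_sq comp_polyM comp_polyX comp_sq -/A -/B -hf.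
ring.
Qed.

Lemma prod_comp (s : seq C) (F : C -> {poly C}) (q : {poly C}) :
  (\prod_(z <- s) F z) \Po q = \prod_(z <- s) (F z \Po q).
Proof.
elim: s => [|z s IH]; first by rewrite !big_nil -polyC1 comp_polyC.
by rewrite !big_cons comp_polyM IH.
Qed.

Lemma sign_sq n : ((-1) ^+ n * (-1) ^+ n : C) = 1.
Proof. by rewrite -expr2 -exprM mulnC exprM sqrrN !expr1n. Qed.

Lemma prod_negX (s : seq C) :
  \prod_(z <- s) (('X - z%:P) \Po - 'X) = (-1) ^+ size s *: \prod_(z <- s) ('X + z%:P).
Proof.
elim: s => [|z s IH]; first by rewrite !big_nil expr0 scale1r.
rewrite !big_cons IH comp_polyB comp_polyX comp_polyC -opprD mulNr -scalerAr.
by rewrite /= exprS -scalerA scaleN1r.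
Qed.

Lemma graeffe_step (c : C) (s : seq C) : c != 0 ->
  graeffe (c *: \prod_(z <- s) ('X - z%:P)) =
  c ^+ 2 *: \prod_(z <- s) ('X - (z ^+ 2)%:P).
Proof.
move=> c0.
have hs : size (c *: \prod_(z <- s) ('X - z%:P)) = (size s).+1.
  by rewrite size_scale // (size_prod_XsubC s id).
rewrite /graeffe hs /=.
apply: comp_X2_inj.
rewrite comp_polyZ graeffe_key.
rewrite [X in _ * X]comp_polyZ prod_comp prod_negX scalerA.
rewrite comp_polyZ prod_comp.
have -> : \prod_(z <- s) (('X - (z ^+ 2)%:P) \Po 'X^2) =
          \prod_(z <- s) ('X - z%:P) * \prod_(z <- s) ('X + z%:P).
  rewrite -big_split /=; apply: eq_bigr => z _.
  by rewrite comp_polyB comp_polyX comp_polyC rmorphXn /= -subr_sqr.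
rewrite -scalerAl -scalerAr !scalerA.
congr (_ *: _).
have h := sign_sq (size s); move: h; set sg := (-1) ^+ size s => h.
rewrite expr2; transitivity (sg * sg * (c * c)); first by ring.
by rewrite h mul1r.
Qed.

Lemma graeffe_iter N (c : C) (s : seq C) : c != 0 ->
  iter N graeffe (c *: \prod_(z <- s) ('X - z%:P)) =
  c ^+ (2 ^ N) *: \prod_(z <- map (fun z => z ^+ (2 ^ N)) s) ('X - z%:P).
Proof.
move=> c0; elim: N => [|N IH].
  by rewrite /= expr1 big_map; congr (_ *: _); apply: eq_bigr => z _; rewrite expr1.
rewrite iterS IH graeffe_step ?expf_neq0 //.
rewrite !big_map -exprM -expnSr; congr (_ *: _).
by apply: eq_bigr => z _; rewrite -exprM -expnSr.
Qed.

End Gr.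
Section Comb.
Variable R : realType.
Variable n : nat.
Variable u : nat -> R.
Hypothesis upos : forall i, (i < n)%N -> 0 < u i.
Hypothesis umono : forall i j, (i <= j)%N -> (j < n)%N -> u i <= u j.

Definition I0 k : {set 'I_n} := [set i : 'I_n | (k <= i)%N].

Lemma card_I0 k : (k <= n)%N -> #|I0 k| = (n - k)%N.
Proof.
move=> kn; rewrite /I0 cardsE -sum1_card.
have e : (\sum_(k <= i < n | true) 1 = \sum_(i < n | true && (k <= i)) 1)%N := big_geq_mkord _ _ _ _.
transitivity (\sum_(i < n | true && (k <= i)) 1)%N.
  by apply: eq_bigl => i /=; rewrite ?inE.
by rewrite -e sum_nat_const_nat muln1.
Qed.

Lemma u_ge0 i : (i < n)%N -> 0 <= u i.
Proof. by move=> h; apply: ltW; apply: upos. Qed.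

Lemma prod_strict k (I : {set 'I_n}) : (0 < k < n)%N -> #|I| = #|I0 k| -> I != I0 k ->
  \prod_(i in I) u i * u k <= \prod_(i in I0 k) u i * u k.-1.
Proof.
move=> /andP[k0 kn] hc hne.
rewrite (big_setID (I0 k)) [X in _ <= X * _](big_setID I) /= finset.setIC.
set A := I :\: I0 k; set B := I0 k :\: I; set Cs := I0 k :&: I.
have hAB : #|A| = #|B|.
  have h1 := cardsID (I0 k) I; have h2 := cardsID I (I0 k).
  rewrite finset.setIC in h2. rewrite -/A -/B -/Cs in h1 h2. lia.
have hA0 : (0 < #|A|)%N.
  rewrite lt0n cards_eq0; apply: contra hne => /eqP hA.
  rewrite eqEcard hc leqnn andbT -finset.setD_eq0; exact/eqP.
have hk1 : (k.-1 < n)%N by apply: leq_ltn_trans (leq_pred k) kn.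
have hpA : \prod_(i in A) u i <= u k.-1 ^+ #|A|.
  rewrite -prodr_const; apply: ler_prod => i; rewrite !inE => /andP[hi _].
  rewrite u_ge0 //= umono //; move: hi; rewrite -ltnNge => hi.
  by rewrite -ltnS prednK.
have hpB : u k ^+ #|B| <= \prod_(i in B) u i.
  rewrite -prodr_const; apply: ler_prod => i; rewrite !inE => /andP[_ hi].
  by rewrite u_ge0 //= umono.
have hC : 0 <= \prod_(i in Cs) u i by apply: prodr_ge0 => i _; apply: u_ge0.
have huk := upos k kn; have huk1 := upos _ hk1.
have hkk : u k.-1 <= u k by apply: umono => //; exact: leq_pred.
rewrite -!mulrA; apply: ler_wpM2l => //.
move: hAB hA0 hpA hpB; case: #|A| => // a <- _ hpA hpB.
apply: (le_trans (ler_wpM2r (ltW huk) hpA)).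
apply: (le_trans _ (ler_wpM2r (ltW huk1) hpB)).
rewrite !exprSr -!mulrA; apply: ler_pM.
- by apply: exprn_ge0; apply: ltW.
- by apply: mulr_ge0; apply: ltW.
- by apply: lerXn2r => //; rewrite nnegrE ltW.
- by rewrite mulrC.
Qed.

Lemma prod_weak k (I : {set 'I_n}) : #|I| = #|I0 k| ->
  \prod_(i in I) u i <= \prod_(i in I0 k) u i.
Proof.
move=> hc; have [->|hne] := eqVneq I (I0 k); first by [].
case: (posnP k) => [k0|kpos].
  exfalso; move/negP: hne; apply; rewrite eqEcard hc leqnn andbT.
  by apply/fintype.subsetP => i _; rewrite inE k0.
case: (ltnP k n) => [kn|nk]; last first.
  exfalso; move/negP: hne; apply; rewrite eq_sym eqEcard hc leqnn andbT.
  by apply/fintype.subsetP => i; rewrite inE => h; move: (leq_trans nk h); rewrite leqNgt ltn_ord.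
have hk1 : (k.-1 < n)%N by apply: leq_ltn_trans (leq_pred k) kn.
have h := prod_strict k I ltac:(by rewrite kpos kn) hc hne.
have huk := upos k kn.
rewrite -(ler_pM2r huk); apply: (le_trans h); apply: ler_wpM2l.
  by apply: prodr_ge0 => i _; apply: u_ge0.
by apply: umono => //; exact: leq_pred.
Qed.

End Comb.
Section Vieta.
Variable R : realType.
Local Notation C := (R[i]).

Lemma card_sets_I m : #|{set 'I_m}| = (2 ^ m)%N.
Proof. by rewrite -cardsT -powersetT card_powerset cardsT card_ord. Qed.

Lemma sum_sets_le m (P : pred {set 'I_m}) (F : {set 'I_m} -> R) (D : R) :
  0 <= D -> (forall I, P I -> F I <= D) -> \sum_(I | P I) F I <= 2 ^+ m * D.
Proof.
move=> D0 hF.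
apply: (le_trans (ler_sum _ hF)).
apply: (@le_trans _ _ (\sum_(I : {set 'I_m}) D)).
  rewrite [X in _ <= X](bigID P) /= lerDl.
  by apply: sumr_ge0.
rewrite sumr_const card_sets_I.
have e : ((2 ^ m)%N%:R : R) = 2 ^+ m by rewrite natrX.
by rewrite -e mulr_natl.
Qed.

Variable w : seq C.
Hypothesis upos : forall i, (i < size w)%N -> 0 < cmod w`_i.
Hypothesis umono : forall i j, (i <= j)%N -> (j < size w)%N -> cmod w`_i <= cmod w`_j.

Definition Ssum k := \sum_(I in {set 'I_(size w)} | #|I| == (size w - k)%N) \prod_(i in I) w`_i.
Definition Dk k := \prod_(i in I0 (size w) k) cmod w`_i.

Lemma coef_Ssum (c : C) k : (k <= size w)%N ->
  (c *: \prod_(z <- w) ('X - z%:P))`_k = c * ((-1) ^+ (size w - k) * Ssum k).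
Proof. by move=> h; rewrite coefZ coef_prod_XsubC. Qed.

Lemma Dk_gt0 k : 0 < Dk k.
Proof. by apply: prodr_gt0 => i _; apply: upos. Qed.

Lemma Ssum_weak k : (k <= size w)%N -> cmod (Ssum k) <= 2 ^+ size w * Dk k.
Proof.
move=> kn; rewrite /Ssum; apply: (le_trans (cmod_sum _ _ _ _ _)).
apply: sum_sets_le; first exact: ltW (Dk_gt0 k).
move=> I /andP[_ /eqP hI]; rewrite cmod_prod.
apply: (prod_weak _ _ _ upos umono); by rewrite hI card_I0.
Qed.

Lemma Ssum_corner k : (0 < k < size w)%N ->
  cmod (Ssum k - \prod_(i in I0 (size w) k) w`_i) <=
  2 ^+ size w * (Dk k * cmod w`_k.-1 / cmod w`_k).
Proof.
move=> /andP[k0 kn].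
have hc : #|I0 (size w) k| = (size w - k)%N by rewrite card_I0 // ltnW.
rewrite /Ssum (bigD1 (I0 (size w) k)) /=; last by rewrite hc eqxx.
rewrite [X in cmod X]addrAC subrr add0r.
apply: (le_trans (cmod_sum _ _ _ _ _)).
apply: sum_sets_le.
  apply: divr_ge0; last exact: cmod_ge0.
  by apply: mulr_ge0; [exact: ltW (Dk_gt0 k) | exact: cmod_ge0].
move=> I /andP[/eqP hI hne]; rewrite cmod_prod.
have huk := upos k kn.
rewrite ler_pdivlMr //.
apply: (prod_strict _ _ _ upos umono) => //; first by rewrite k0 kn.
by rewrite hI hc.
Qed.

Lemma Ssum_edge k : (k == 0%N) || (k == size w) ->
  Ssum k = \prod_(i in I0 (size w) k) w`_i.
Proof.
move=> hk.
have kn : (k <= size w)%N by case/orP: hk => /eqP ->.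
rewrite /Ssum (big_pred1 (I0 (size w) k)) // => I /=.
apply/idP/idP.
  move/eqP => hI; case/orP: hk => /eqP hk; subst k.
    rewrite eqEcard hI card_I0 // leqnn andbT.
    by apply/fintype.subsetP => i _; rewrite inE.
  rewrite eq_sym eqEcard hI card_I0 // leqnn andbT.
  apply/fintype.subsetP => i; rewrite inE => h.
  by move: (leq_ltn_trans h (ltn_ord i)); rewrite ltnn.
by move/eqP => ->; rewrite card_I0.
Qed.

Lemma cmod_prod_I0 k : cmod (\prod_(i in I0 (size w) k) w`_i) = Dk k.
Proof. by rewrite cmod_prod. Qed.

End Vieta.
Section Helpers.
Variable R : realType.

Lemma ln_prod_seq (I : Type) (r : seq I) (P : pred I) (F : I -> R) :
  (forall i, P i -> 0 < F i) ->
  ln (\prod_(i <- r | P i) F i) = \sum_(i <- r | P i) ln (F i).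
Proof.
move=> hF; elim: r => [|x r IH]; first by rewrite !big_nil ln1.
rewrite !big_cons; case: ifP => // Px.
rewrite lnM ?posrE ?IH //; first exact: hF.
exact: prodr_gt0.
Qed.

Lemma sum_I0 (n x : nat) (F : nat -> R) :
  \sum_(i in I0 n x) F i = \sum_(x <= i < n) F i.
Proof.
have e : \sum_(x <= i < n | true) F i = \sum_(i < n | true && (x <= i)%N) F i :=
  big_geq_mkord _ _ _ _.
by rewrite e; apply: eq_bigl => i /=; rewrite inE.
Qed.

Lemma ln_ratio (A B th : R) : 0 < B -> 0 < th -> th <= 1 / 2 ->
  B * (1 - th) <= A -> A <= B * (1 + th) -> `|ln B - ln A| <= - ln (1 - th).
Proof.
move=> B0 th0 th1 h1 h2.
have h1t : 0 < 1 - th by lra.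
have A0 : 0 < A by apply: (lt_le_trans _ h1); apply: mulr_gt0.
have la1 : ln B + ln (1 - th) <= ln A.
  by rewrite -lnM ?posrE // ler_ln ?posrE //; apply: mulr_gt0.
have la2 : ln A <= ln B + ln (1 + th).
  rewrite -lnM ?posrE //; last lra.
  by rewrite ler_ln ?posrE //; apply: mulr_gt0 => //; lra.
have l3 : ln (1 + th) + ln (1 - th) <= 0.
  rewrite -lnM ?posrE //; last lra.
  by apply: ln_le0; nra.
rewrite ler_norml; apply/andP; split; lra.
Qed.

Lemma ln_upper (A B K : R) : 0 < A -> 0 < B -> 0 < K -> A <= K * B ->
  ln A <= ln K + ln B.
Proof.
move=> A0 B0 K0 h.
by rewrite -lnM ?posrE // ler_ln ?posrE //; apply: mulr_gt0.
Qed.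

End Helpers.
Section Numeric.
Variable R : realType.

Lemma ln2_ge : (1 / 2 : R) <= ln 2.
Proof.
have h := @le_ln1Dx R (- (1/2)) ltac:(lra).
have e : (1 + - (1 / 2) : R) = 2^-1 by field.
rewrite e lnV ?posrE // in h; lra.
Qed.

Lemma ln2_gt0 : (0 : R) < ln 2.
Proof. by apply: ln_gt0; lra. Qed.

Lemma lnX2 n : ln ((2 : R) ^+ n) = n%:R * ln 2.
Proof. by rewrite lnXn // mulr_natl. Qed.

Lemma numeric (d N : nat) (rho : R) : (1 <= d)%N -> 1 < rho ->
  3 + ln (d%:R * ln 2 / ln rho) / ln 2 < N%:R ->
  let Rr := rho ^+ (2 ^ N) in
  let theta := 2 ^+ d / Rr in
  let eps := - (2 ^- N * ln (1 - theta)) in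
  let del := 2 ^- N * ln (2 ^+ d + 2 ^+ d / Rr) in
  [/\ 0 < theta, theta <= 1 / 2, 0 <= eps, 0 <= del &
      2 * (del + eps) < sch_E N d rho /\
      sch_E N d rho + del + 4 * eps <= ln rho].
Proof.
move=> d1 rho1 HN Rr theta eps del.
have l2 := ln2_gt0; have l2h := ln2_ge.
have lam0 : 0 < ln rho by apply: ln_gt0.
have Q0 : (0 : R) < 2 ^+ N by apply: exprn_gt0.
have dR : (1 : R) <= d%:R by rewrite ler1n.
have X0 : 0 < d%:R * ln 2 / ln rho.
  by apply: divr_gt0 => //; apply: mulr_gt0 => //; lra.
have key : 8 * (d%:R * ln 2) < 2 ^+ N * ln rho.
  have h1 : ln (d%:R * ln 2 / ln rho) < (N%:R - 3) * ln 2.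
    by rewrite -ltr_pdivrMr //; lra.
  have h2 : ln (8 * (d%:R * ln 2 / ln rho)) < ln (2 ^+ N).
    rewrite lnM ?posrE //.
    have -> : (8 : R) = 2 ^+ 3 by rewrite -natrX.
    rewrite !lnX2; lra.
  rewrite ltr_ln ?posrE // in h2; last by apply: mulr_gt0 => //.
  by move: h2; rewrite mulrA ltr_pdivrMr.
have lnRr : ln Rr = 2 ^+ N * ln rho.
  rewrite /Rr lnXn; last lra.
  have e : ((2 ^ N)%N%:R : R) = 2 ^+ N by rewrite natrX.
  by rewrite -e mulr_natl.
have Rr0 : 0 < Rr by apply: exprn_gt0; lra.
have hd0 : (0 : R) < 2 ^+ d by apply: exprn_gt0; lra.
have hR8 : 2 ^+ (8 * d) < Rr.
  have p8 : (0:R) < 2 ^+ (8 * d) by apply: exprn_gt0; lra.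
  rewrite -ltr_ln ?posrE // lnRr lnX2 natrM; lra.
have hd2 : (2 : R) <= 2 ^+ d.
  by rewrite -{1}(expr1 (2:R)) ler_eXn2l //; lra.
have h128 : 128 * 2 ^+ d <= (2 : R) ^+ (8 * d).
  rewrite mulnC exprM exprSr.
  apply: ler_wpM2r; first lra.
  have -> : (128 : R) = 2 ^+ 7 by rewrite -natrX.
  by apply: lerXn2r; rewrite ?nnegrE //; lra.
have th0 : 0 < theta by apply: divr_gt0.
have th1 : theta <= 1 / 128.
  rewrite /theta ler_pdivrMr //; lra.
have th2 : theta <= 1 / 2 by lra.
have hZ : - ln (1 - theta) <= 2 * theta.
  have hx : -1 < theta / (1 - theta).
    have : 0 <= theta / (1 - theta) by apply: divr_ge0; lra.
    lra.
  have h := le_ln1Dx hx.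
  have e : 1 + theta / (1 - theta) = (1 - theta)^-1 by field; lra.
  rewrite e lnV ?posrE in h; last lra.
  apply: (le_trans h); rewrite ler_pdivrMr; last lra.
  nra.
have hZ0 : 0 <= - ln (1 - theta) by rewrite oppr_ge0; apply: ln_le0; lra.
have Rri : 0 < Rr^-1 by rewrite invr_gt0.
have hY : ln (2 ^+ d + 2 ^+ d / Rr) <= d%:R * ln 2 + Rr^-1.
  have e : 2 ^+ d + 2 ^+ d / Rr = 2 ^+ d * (1 + Rr^-1) by rewrite mulrDr mulr1.
  rewrite e lnM ?posrE //; last lra.
  rewrite lnX2 lerD2l; apply: le_ln1Dx; lra.
have hY0 : 0 <= ln (2 ^+ d + 2 ^+ d / Rr).
  apply: ln_ge0; have : 0 <= 2 ^+ d / Rr by apply: divr_ge0; lra.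
  lra.
have hRi : Rr^-1 < 1 / 256.
  rewrite -div1r ltr_pdivrMr // mulrC -ltr_pdivrMr //; lra.
have Qi0 : (0 : R) < (2 ^+ N)^-1 by rewrite invr_gt0.
have hE : sch_E N d rho = del + 2 * eps + ln rho / 4.
  by rewrite /sch_E /del /eps /theta /Rr; field; apply: lt0r_neq0.
have eps0 : 0 <= eps by rewrite /eps -mulrN; apply: mulr_ge0; lra.
have del0 : 0 <= del by apply: mulr_ge0; lra.
have hdel : del < ln rho / 4.
  rewrite /del ltr_pdivrMl //; nra.
have heps : 6 * eps <= ln rho / 4.
  rewrite /eps -mulrN.
  have h : (2 ^+ N)^-1 * - ln (1 - theta) <= (2 ^+ N)^-1 * (1 / 64).
    by apply: ler_wpM2l; lra.
  suff : (2 ^+ N)^-1 * (1 / 64) <= ln rho / 24 by lra.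
  rewrite mulrC ler_pdivrMr //; nra.
split => //.
by rewrite hE; split; lra.
Qed.
End Numeric.
Section Main.
Variable R : realType.
Local Notation C := (R[i]).
Variables (d : nat) (f : {poly C}) (zeta : nat -> C) (rho : R) (N : nat).
Hypothesis hsize : size f = d.+1.
Hypothesis hf0 : f.[0] != 0.
Hypothesis hfprod : f = lead_coef f *: \prod_(1 <= k < d.+1) ('X - (zeta k)%:P).
Hypothesis hsorted : forall k, (1 <= k < d)%N -> cmod (zeta k) <= cmod (zeta k.+1).
Hypothesis hrhomin : forall k, (1 <= k < d)%N -> cmod (zeta k) < cmod (zeta k.+1) ->
             rho <= cmod (zeta k.+1) / cmod (zeta k).

Let c := lead_coef f.
Let M := (2 ^ N)%N.
Let s := [seq zeta k | k <- iota 1 d].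
Let w := [seq z ^+ M | z <- s].

Lemma c_neq0 : c != 0.
Proof. by rewrite /c lead_coef_eq0; apply/eqP => f0; move: hsize; rewrite f0 size_poly0. Qed.

Lemma f_prod : f = c *: \prod_(z <- s) ('X - z%:P).
Proof. by rewrite {1}hfprod big_map /index_iota subSS subn0. Qed.

Lemma g_eq : iter N graeffe f = c ^+ M *: \prod_(z <- w) ('X - z%:P).
Proof. by rewrite {1}f_prod graeffe_iter // c_neq0. Qed.

Lemma size_w : size w = d.
Proof. by rewrite !size_map size_iota. Qed.

Lemma w_nth i : (i < d)%N -> w`_i = zeta i.+1 ^+ M.
Proof.
move=> id; rewrite (nth_map 0) ?size_map ?size_iota //.
by rewrite (nth_map 0%N) ?size_iota // nth_iota // add1n.
Qed.

Lemma zeta_neq0 j : (1 <= j <= d)%N -> zeta j != 0.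
Proof.
move=> hj; apply/negP => /eqP hz; move: hf0.
rewrite f_prod hornerZ horner_prod mulf_eq0 negb_or => /andP[_].
rewrite prodf_seq_eq0 => /hasPn H.
have hs : zeta j \in s by apply: map_f; rewrite mem_iota add1n ltnS.
by move: (H _ hs); rewrite hornerXsubC hz subrr eqxx.
Qed.

Let mz j := cmod (zeta j).

Lemma mz_pos j : (1 <= j <= d)%N -> 0 < mz j.
Proof. by move=> h; apply: cmod_gt0; apply: zeta_neq0. Qed.

Lemma mz_mono i j : (1 <= i)%N -> (i <= j)%N -> (j <= d)%N -> mz i <= mz j.
Proof.
move=> i1; elim: j => [|j IH] hij hjd; first by move: (leq_trans i1 hij).
case: (ltngtP i j.+1) => [h|h|->//].
  apply: (le_trans (IH h (ltnW hjd))).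
  by apply: hsorted; rewrite hjd andbT (leq_trans i1 h).
by move: hij; rewrite leqNgt h.
Qed.

Lemma upos i : (i < size w)%N -> 0 < cmod w`_i.
Proof.
rewrite size_w => h; rewrite w_nth // cmodX; apply: exprn_gt0; apply: mz_pos.
by rewrite ltnS.
Qed.

Lemma umono i j : (i <= j)%N -> (j < size w)%N -> cmod w`_i <= cmod w`_j.
Proof.
rewrite size_w => hij hj.
have hi : (i < d)%N := leq_ltn_trans hij hj.
rewrite !w_nth // !cmodX.
have p1 : 0 < mz i.+1 by apply: mz_pos; exact: hi.
have p2 : 0 < mz j.+1 by apply: mz_pos; exact: hj.
apply: lerXn2r; rewrite ?nnegrE.
- exact: ltW p1.
- exact: ltW p2.
by apply: mz_mono.
Qed.

Let ell i := ln (mz i.+1).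

Lemma ln_u i : (i < d)%N -> ln (cmod w`_i) = M%:R * ell i.
Proof.
move=> h; rewrite w_nth // cmodX lnXn ?mulr_natl //.
by apply: mz_pos; exact: h.
Qed.

Lemma lnDk x : (x <= d)%N ->
  ln (@Dk R w x) = M%:R * \sum_(x <= i < d) ell i.
Proof.
move=> xd; rewrite /Dk ln_prod_seq; last by move=> i _; apply: upos.
rewrite mulr_sumr -size_w -sum_I0.
by apply: eq_bigr => i _; rewrite ln_u // -size_w.
Qed.

Hypothesis hd1 : (1 <= d)%N.
Hypothesis hrho1 : 1 < rho.
Hypothesis hN : 3 + ln (d%:R * ln 2 / ln rho) / ln 2 < N%:R.

Let g := iter N graeffe f.
Let Lf x := - ln (cmod c) - \sum_(x <= i < d) ell i.
Let tf x := - (2 ^- N * ln (cmod g`_x)).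
Let Sx x := @Ssum R w x.
Let Dx x := @Dk R w x.
Let rr := fun k : nat => if g`_k == 0 then +oo%E else (- (2 ^- N * ln (cmod g`_k)))%:E.
Let Pc := fun k : nat =>
  [|| k == 0%N, k == d | (1 <= k <= d.-1)%N && (cmod (zeta k) < cmod (zeta k.+1))].
Let Rr := rho ^+ (2 ^ N).
Let theta := 2 ^+ d / Rr.
Let eps := - (2 ^- N * ln (1 - theta)).
Let del := 2 ^- N * ln (2 ^+ d + 2 ^+ d / Rr).

Lemma coef_g x : (x <= d)%N -> g`_x = c ^+ M * ((-1) ^+ (size w - x) * Sx x).
Proof. by move=> h; rewrite /g g_eq coef_Ssum // size_w. Qed.

Lemma cmod_g x : (x <= d)%N -> cmod g`_x = cmod c ^+ M * cmod (Sx x).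
Proof. by move=> h; rewrite coef_g // !cmodM cmodX cmod_sign mul1r. Qed.

Lemma c_pos : 0 < cmod c.
Proof. by apply: cmod_gt0; exact: c_neq0. Qed.

Lemma g_neq0 x : (x <= d)%N -> Sx x != 0 -> g`_x != 0.
Proof.
move=> xd S0; apply/negP => /eqP h.
have := cmod_g _ xd; rewrite h cmod0 => e.
have : 0 < cmod c ^+ M * cmod (Sx x).
  by apply: mulr_gt0; [apply: exprn_gt0; exact: c_pos | apply: cmod_gt0].
by rewrite -e ltxx.
Qed.

Lemma rr_fin x : (x <= d)%N -> Sx x != 0 -> rr x = (tf x)%:E.
Proof. by move=> xd S0; rewrite /rr (negbTE (g_neq0 _ xd S0)). Qed.

Lemma tL x : (x <= d)%N -> Sx x != 0 ->
  tf x - Lf x = 2 ^- N * (ln (Dx x) - ln (cmod (Sx x))).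
Proof.
move=> xd S0.
have c0 := c_pos.
have S0' : 0 < cmod (Sx x) by apply: cmod_gt0.
rewrite /tf /Lf cmod_g // lnM ?posrE //; last exact: exprn_gt0.
have hM : (M%:R : R) = 2 ^+ N by rewrite natrX.
rewrite lnXn // /Dx lnDk // -[ln (cmod c) *+ M]mulr_natl hM.
by field; apply: lt0r_neq0; apply: exprn_gt0.
Qed.

Lemma Qi_ge0 : (0 : R) <= 2 ^- N.
Proof. by rewrite invr_ge0; apply: exprn_ge0. Qed.

Lemma Hc_main x : (x <= d)%N -> Pc x -> rr x = (tf x)%:E /\ `|tf x - Lf x| <= eps.
Proof.
move=> xd Px; move: (hrho1) => hr1.
have [th0' th1' _ _ _] := @numeric R d N rho hd1 hrho1 hN.
have th0 : 0 < theta := th0'. have th1 : theta <= 1 / 2 := th1'.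
have D0 : 0 < Dx x by apply: Dk_gt0; exact: upos.
suff [S0 hb] : Sx x != 0 /\ `|ln (Dx x) - ln (cmod (Sx x))| <= - ln (1 - theta).
  split; first exact: rr_fin.
  rewrite tL // normrM (ger0_norm Qi_ge0) /eps -mulrN.
  by apply: ler_wpM2l => //; exact: Qi_ge0.
have hP0 : cmod (\prod_(i in I0 (size w) x) w`_i) = Dx x by rewrite cmod_prod.
case/or3P: Px => [x0|xd'|/andP[/andP[x1 xd1] hlt]].
- have hS : Sx x = \prod_(i in I0 (size w) x) w`_i by apply: Ssum_edge; rewrite x0.
  have hA : cmod (Sx x) = Dx x by rewrite hS hP0.
  split; first by apply/negP => /eqP h; move: hA; rewrite h cmod0 => e; move: D0; rewrite -e ltxx.
  rewrite hA subrr normr0 oppr_ge0; apply: ln_le0; lra.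
- have hS : Sx x = \prod_(i in I0 (size w) x) w`_i by apply: Ssum_edge; rewrite size_w xd' orbT.
  have hA : cmod (Sx x) = Dx x by rewrite hS hP0.
  split; first by apply/negP => /eqP h; move: hA; rewrite h cmod0 => e; move: D0; rewrite -e ltxx.
  rewrite hA subrr normr0 oppr_ge0; apply: ln_le0; lra.
have xlt : (x < d)%N by move: xd1; case: d hd1 => // d' _; rewrite ltnS.
have hk : (0 < x < size w)%N by rewrite size_w x1 xlt.
have hc : cmod (Sx x - \prod_(i in I0 (size w) x) w`_i) <=
    2 ^+ size w * (Dx x * cmod w`_x.-1 / cmod w`_x) := @Ssum_corner R w upos umono x hk.
have mx0 : 0 < cmod (zeta x) by apply: mz_pos; rewrite x1 (ltnW xlt).
have mx1 : 0 < cmod (zeta x.+1) by apply: mz_pos; exact: xlt.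
have hq : cmod w`_x.-1 / cmod w`_x <= Rr^-1.
  have e1 : w`_x.-1 = zeta x ^+ M by rewrite w_nth ?prednK // (leq_ltn_trans (leq_pred x) xlt).
  have e2 : w`_x = zeta x.+1 ^+ M by rewrite w_nth.
  rewrite e1 e2 !cmodX -expr_div_n /Rr -exprVn.
  apply: lerXn2r; rewrite ?nnegrE.
  - by apply: divr_ge0; apply: ltW.
  - by rewrite invr_ge0; lra.
  have h := hrhomin x ltac:(by rewrite x1 xlt) hlt.
  rewrite -(invf_div (cmod (zeta x.+1)) (cmod (zeta x))) lef_pV2 ?posrE //; last lra.
  by apply: divr_gt0.
have hb : 2 ^+ size w * (Dx x * cmod w`_x.-1 / cmod w`_x) <= theta * Dx x.
  rewrite size_w -mulrA.
  apply: (@le_trans _ _ (2 ^+ d * (Dx x * Rr^-1))).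
    apply: ler_wpM2l; first exact: exprn_ge0 (ler0n _ 2).
    by apply: ler_wpM2l; [exact: ltW D0 | exact: hq].
  by rewrite mulrCA mulrC.
have hc' := le_trans hc hb.
set P0 := \prod_(i in I0 (size w) x) w`_i in hc' hP0.
have up : cmod (Sx x) <= Dx x * (1 + theta).
  have := @cmodD R P0 (Sx x - P0); rewrite addrC subrK hP0 => h; lra.
have lo : Dx x * (1 - theta) <= cmod (Sx x).
  have e : cmod (P0 - Sx x) = cmod (Sx x - P0) by rewrite -opprB cmodN.
  have := @cmodD R (Sx x) (P0 - Sx x); rewrite addrC subrK hP0 e => h; lra.
split.
  apply/negP => /eqP h; move: lo; rewrite h cmod0 => h'.
  have : 0 < Dx x * (1 - theta) by apply: mulr_gt0 => //; lra.
  lra.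
by apply: ln_ratio.
Qed.

Lemma Hn_main x : (x <= d)%N -> ~~ Pc x ->
  rr x = +oo%E \/ (rr x = (tf x)%:E /\ Lf x - del <= tf x).
Proof.
move=> xd nPx; move: (hrho1) => hr1.
have [Sz|S0] := eqVneq (Sx x) 0.
  by left; rewrite /rr coef_g // Sz !mulr0 eqxx.
right; split; first exact: rr_fin.
have D0 : 0 < Dx x by apply: Dk_gt0; exact: upos.
have A0 : 0 < cmod (Sx x) by apply: cmod_gt0.
have Rr0 : 0 < Rr by apply: exprn_gt0; lra.
have h2 : (0 : R) < 2 by lra.
have hdd : (0 : R) < 2 ^+ d by apply: exprn_gt0.
have K0 : 0 < 2 ^+ d + 2 ^+ d / Rr.
  by apply: addr_gt0 => //; apply: divr_gt0.
have hA : cmod (Sx x) <= (2 ^+ d + 2 ^+ d / Rr) * Dx x.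
  apply: (le_trans (@Ssum_weak R w upos umono x _)); first by rewrite size_w.
  rewrite size_w; apply: ler_wpM2r; first exact: ltW.
  by rewrite lerDl; apply: divr_ge0; apply: ltW.
have hl := @ln_upper R _ _ _ A0 D0 K0 hA.
have e := tL _ xd S0.
have hq := Qi_ge0.
have : 2 ^- N * (- ln (2 ^+ d + 2 ^+ d / Rr)) <=
       2 ^- N * (ln (Dx x) - ln (cmod (Sx x))).
  by apply: ler_wpM2l => //; lra.
rewrite mulrN -e => h.
have hdel : del = 2 ^- N * ln (2 ^+ d + 2 ^+ d / Rr) by [].
lra.
Qed.

Lemma ell_step y : (0 < y < d)%N -> ~~ Pc y -> ell y.-1 = ell y.
Proof.
move=> /andP[y0 yd] nP.
have hy : (0 < y <= d.-1)%N by rewrite y0 /= -ltnS (ltn_predK yd).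
move: nP; rewrite /Pc (gtn_eqF y0) (ltn_eqF yd) hy /= -leNgt => hle.
have hge := hsorted y ltac:(by rewrite y0 yd).
have eq : cmod (zeta y) = cmod (zeta y.+1) by apply/eqP; rewrite eq_le hge hle.
by rewrite /ell prednK // /mz eq.
Qed.

Lemma ell_seg a cc i : Pc a -> (a < cc)%N -> (cc <= d)%N ->
  (forall y, (a < y < cc)%N -> ~~ Pc y) -> (a <= i < cc)%N -> ell i = ell a.
Proof.
move=> Pa ac cd hno; elim: i => [|i IH] /andP[ai ic].
  by move: ai; rewrite leqn0 => /eqP ->.
case: (ltngtP a i.+1) => [h|h|->//]; last by move: ai; rewrite leqNgt h.
rewrite -IH; last by rewrite -ltnS h (ltn_trans (ltnSn i) ic).
have h1 : (0 < i.+1 < d)%N by exact: (leq_trans ic cd).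
have h2 : ~~ Pc i.+1 by apply: hno; rewrite h ic.
by rewrite -(ell_step i.+1 h1 h2).
Qed.

Lemma Hlin_main a cc x : Pc a -> Pc cc -> (a < cc)%N -> (cc <= d)%N ->
  (forall y, (a < y < cc)%N -> ~~ Pc y) -> (a <= x <= cc)%N ->
  Lf x = Lf a + (x - a)%:R * ell a.
Proof.
move=> Pa Pc' ac cd hno /andP[ax xc].
have xd : (x <= d)%N := leq_trans xc cd.
have hs : \sum_(a <= i < x) ell i = \sum_(a <= i < x) ell a.
  apply: eq_big_nat => i /andP[h1 h2]; apply: (ell_seg _ _ _ Pa ac cd hno).
  by rewrite h1 (leq_trans h2 xc).
rewrite sumr_const_nat -mulr_natl in hs.
have eLx : Lf x = - ln (cmod c) - \sum_(x <= i < d) ell i by [].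
have eLa : Lf a = - ln (cmod c) - \sum_(a <= i < d) ell i by [].
rewrite eLx eLa (big_cat_nat ax xd) /= hs.
lra.
Qed.

Lemma Hkink_main b a cc : Pc b -> Pc a -> Pc cc -> (b < a)%N -> (a < cc)%N -> (cc <= d)%N ->
  (forall y, (b < y < a)%N -> ~~ Pc y) -> (forall y, (a < y < cc)%N -> ~~ Pc y) ->
  ell b + ln rho <= ell a.
Proof.
move=> Pb Pa Pc' ba ac cd nob noa.
move: (hrho1) => hr1.
have a0 : (0 < a)%N by apply: leq_ltn_trans ba.
have ad : (a < d)%N := leq_trans ac cd.
have eb : ell a.-1 = ell b.
  apply: (ell_seg _ _ _ Pb ba (ltnW ad) nob).
  by apply/andP; split; [rewrite -ltnS prednK | rewrite ltn_predL].
have hlt : cmod (zeta a) < cmod (zeta a.+1).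
  by move: Pa; rewrite /Pc (gtn_eqF a0) (ltn_eqF ad) /= => /andP[_].
have hr := hrhomin a ltac:(by rewrite a0 ad) hlt.
have m0 : 0 < cmod (zeta a) by apply: mz_pos; rewrite a0 (ltnW ad).
have m1 : 0 < cmod (zeta a.+1) by apply: mz_pos; exact: ad.
have : ln rho <= ln (cmod (zeta a.+1) / cmod (zeta a)).
  rewrite ler_ln ?posrE //; first lra.
  by apply: divr_gt0.
rewrite lnM ?posrE ?invr_gt0 // lnV ?posrE //.
rewrite -eb /ell prednK //.
rewrite /mz; lra.
Qed.

Lemma main_in_section :
  strict_convex_hull N d
    (fun k : nat => if (iter N graeffe f)`_k == 0 then +oo%E
                    else (- (2 ^- N * ln (cmod (iter N graeffe f)`_k)))%:E) rho =
  [seq k <- iota 0 d.+1 |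
      [|| k == 0%N, k == d
        | (1 <= k <= d.-1)%N && (cmod (zeta k) < cmod (zeta k.+1))]].
Proof.
have [_ _ eps0 del0 [HE1 HE2]] := @numeric R d N rho hd1 hrho1 hN.
rewrite /strict_convex_hull.
apply: (@sch_correct R d rr (sch_E N d rho) Pc Lf tf ell eps del (ln rho)).
- by [].
- by rewrite /Pc eqxx orbT.
- exact: Hc_main.
- exact: Hn_main.
- exact: Hlin_main.
- exact: Hkink_main.
- exact: eps0.
- exact: del0.
- exact: HE1.
- exact: HE2.
Qed.

End Main.


Theorem mainTheorem1 (R : realType) (d : nat) (f : {poly R[i]})
    (zeta : nat -> R[i]) (rho : R) (N : nat) :
  size f = d.+1 ->
  f.[0] != 0 ->
  f = lead_coef f *: \prod_(1 <= k < d.+1) ('X - (zeta k)%:P) ->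
  (forall k, (1 <= k < d)%N -> cmod (zeta k) <= cmod (zeta k.+1)) ->
  (exists k l, [/\ (1 <= k <= d)%N, (1 <= l <= d)%N & cmod (zeta k) != cmod (zeta l)]) ->
  (exists2 k, (1 <= k < d)%N /\ cmod (zeta k) < cmod (zeta k.+1)
            & rho = cmod (zeta k.+1) / cmod (zeta k)) ->
  (forall k, (1 <= k < d)%N -> cmod (zeta k) < cmod (zeta k.+1) ->
             rho <= cmod (zeta k.+1) / cmod (zeta k)) ->
  (0 < N)%N ->
  3 + ln (d%:R * ln 2 / ln rho) / ln 2 < N%:R ->
  let g := iter N graeffe f in
  let r := fun k : nat =>
    if g`_k == 0 then +oo%E else (- (2 ^- N * ln (cmod g`_k)))%:E in
  strict_convex_hull N d r rho =
    [seq k <- iota 0 d.+1 |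
      [|| k == 0%N, k == d
        | (1 <= k <= d.-1)%N && (cmod (zeta k) < cmod (zeta k.+1))]].
move=> hsize hf0 hfprod hsorted _ [k0 [hk0 hlt0] hrho] hrhomin _ hN.
have hd1 : (1 <= d)%N.
  by case/andP: hk0 => h1 h2; exact: (leq_trans h1 (ltnW h2)).
have hz0 : 0 < cmod (zeta k0).
  apply: cmod_gt0; apply: (@zeta_neq0 R d f zeta hf0 hfprod k0).
  by case/andP: hk0 => h1 h2; rewrite h1 ltnW.
have hrho1 : 1 < rho by rewrite hrho ltr_pdivlMr // mul1r.
exact: (@main_in_section R d f zeta rho N hsize hf0 hfprod hsorted hrhomin hd1 hrho1 hN).
Qed.
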